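(* Let $0\le r\le I_k$ be a self-adjoint $k\times k$ matrix over $\mathbb K$, let $\eta\in G_{n,k'}$, and let $x\in S_{n,k}$ with $x=g_x\hat x_0$ for some $g_x\in U(n)$. Then $\operatorname{Cos}^2(\eta,x)=\delta_0r\delta_0^\ast$ for some $\delta_0\in U(k)$ if and only if $\eta=g_x\rho\, j(r^{1/2})\eta_0$ for some $\rho\in K$.
   Context: $\mathbb K\in\{\mathbb R,\mathbb C,\mathbb H\}$, $x^\ast=\bar x^T$, $\mathbb K^n$ viewed as column vectors with scalars acting on the right. Integers $1\le k\le k'<n$ with $k+k'\le n$. $U(l)=\{g\in M_{l,l}(\mathbb K):g^\ast g=I_l\}$. $S_{n,k}=\{x\in M_{n,k}:x^\ast x=I_k\}$; $G_{n,k}$ is the Grassmannian of $k$-dimensional $\mathbb K$-subspaces of $\mathbb K^n$, and $\{x\}=x\mathbb K^k$. Reference points: $\hat x_0=\begin{bmatrix}0\\ I_k\end{bmatrix}\in S_{n,k}$, $y_0=\begin{bmatrix}I_{k'}\\0\end{bmatrix}\in S_{n,k'}$, $\eta_0=\{y_0\}\in G_{n,k'}$. $K=\{\operatorname{diag}(\alpha,\delta):\alpha\in U(n-k),\delta\in U(k)\}\subset U(n)$. For $\eta\in G_{n,k'}$ let $P_\eta$ be the orthogonal projection of $\mathbb K^n$ onto $\eta$ and, for $x\in S_{n,k}$, $\operatorname{Cos}^2(\eta,x)=x^\ast P_\eta x$ (a $k\times k$ positive semidefinite matrix). For $a\in M_{k,k}(\mathbb K)$ with $a^\ast a\le I_k$,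 $j(a)\in U(n)$ is the block matrix with respect to $\mathbb K^n=\mathbb K^{k'-k}\oplus\mathbb K^k\oplus\mathbb K^{n-k'-k}\oplus\mathbb K^k$: $$j(a)=\begin{bmatrix}I_{k'-k}&0&0&0\\0&(I_k-a^\ast a)^{1/2}&0&a^\ast\\0&0&I_{n-k'-k}&0\\0&-a&0&(I_k-aa^\ast)^{1/2}\end{bmatrix},$$ and $j(a)\eta_0$ denotes the image subspace. *)

(* Defs.v *)
From HB Require Import structures.
From mathcomp Require Import all_boot all_order all_algebra.
From mathcomp Require Import ring.
From mathcomp Require Import reals.
From Stdlib Require Import ClassicalEpsilon.
Set Implicit Arguments. Unset Strict Implicit. Unset Printing Implicit Defensive.
Import Order.TTheory GRing.Theory Num.Theory.
Local Open Scope ring_scope.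

Record quat (R : Type) := Quat { qre : R; qi : R; qj : R; qk : R }.
Definition quat_to4 (R : Type) (q : quat R) := (qre q, qi q, qj q, qk q).
Definition quat_of4 (R : Type) (t : R * R * R * R) :=
  let: (a, b, c, d) := t in Quat a b c d.
Lemma quat_to4K (R : Type) : cancel (@quat_to4 R) (@quat_of4 R).
Proof. by case. Qed.
HB.instance Definition _ (R : eqType) := Equality.copy (quat R) (can_type (@quat_to4K R)).
HB.instance Definition _ (R : choiceType) := Choice.copy (quat R) (can_type (@quat_to4K R)).

Definition qzero (R : comNzRingType) : quat R := Quat 0 0 0 0.
Definition qone (R : comNzRingType) : quat R := Quat 1 0 0 0.
Definition qadd (R : comNzRingType) (p q : quat R) : quat R :=
  Quat (qre p + qre q) (qi p + qi q) (qj p + qj q) (qk p + qk q).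
Definition qopp (R : comNzRingType) (p : quat R) : quat R :=
  Quat (- qre p) (- qi p) (- qj p) (- qk p).
Definition qmul (R : comNzRingType) (p q : quat R) : quat R :=
  Quat (qre p * qre q - qi p * qi q - qj p * qj q - qk p * qk q)
       (qre p * qi q + qi p * qre q + qj p * qk q - qk p * qj q)
       (qre p * qj q - qi p * qk q + qj p * qre q + qk p * qi q)
       (qre p * qk q + qi p * qj q - qj p * qi q + qk p * qre q).

Lemma qaddA (R : comNzRingType) : associative (@qadd R).
Proof. by move=> [? ? ? ?] [? ? ? ?] [? ? ? ?]; congr Quat; rewrite /= addrA. Qed.
Lemma qaddC (R : comNzRingType) : commutative (@qadd R).
Proof. by move=> [? ? ? ?] [? ? ? ?]; congr Quat; rewrite /= addrC. Qed.
Lemma qadd0 (R : comNzRingType) : left_id (@qzero R) (@qadd R).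
Proof. by move=> [? ? ? ?]; congr Quat; rewrite /= add0r. Qed.
Lemma qaddN (R : comNzRingType) : left_inverse (@qzero R) (@qopp R) (@qadd R).
Proof. by move=> [? ? ? ?]; congr Quat; rewrite /= addNr. Qed.
HB.instance Definition _ (R : comNzRingType) :=
  GRing.isZmodule.Build (quat R) (@qaddA R) (@qaddC R) (@qadd0 R) (@qaddN R).

Lemma qmulA (R : comNzRingType) : associative (@qmul R).
Proof. by move=> [? ? ? ?] [? ? ? ?] [? ? ? ?]; congr Quat => /=; ring. Qed.
Lemma qmul1 (R : comNzRingType) : left_id (@qone R) (@qmul R).
Proof. by move=> [? ? ? ?]; congr Quat => /=; ring. Qed.
Lemma qmulr1 (R : comNzRingType) : right_id (@qone R) (@qmul R).
Proof. by move=> [? ? ? ?]; congr Quat => /=; ring. Qed.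
Lemma qmulDl (R : comNzRingType) : left_distributive (@qmul R) +%R.
Proof. by move=> [? ? ? ?] [? ? ? ?] [? ? ? ?]; congr Quat => /=; ring. Qed.
Lemma qmulDr (R : comNzRingType) : right_distributive (@qmul R) +%R.
Proof. by move=> [? ? ? ?] [? ? ? ?] [? ? ? ?]; congr Quat => /=; ring. Qed.
Lemma qone_neq0 (R : comNzRingType) : @qone R != 0.
Proof. by apply/eqP => -[] /eqP; rewrite oner_eq0. Qed.
HB.instance Definition _ (R : comNzRingType) :=
  GRing.Zmodule_isNzRing.Build (quat R) (@qmulA R) (@qmul1 R) (@qmulr1 R)
    (@qmulDl R) (@qmulDr R) (@qone_neq0 R).

(* The three real division algebras R, C, H are realised inside the         *)
(* quaternions quat R (R a realType):                                       *)
(*   R = { q | qi q = qj q = qk q = 0 },  C = { q | qj q = qk q = 0 },  H.   *)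
(* K^n = column vectors with entries in K, scalars acting on the right      *)
(* (v *m c with c a K-column), as in the paper.                             *)

Inductive Kfield := Kreal | Kcomplex | Kquat.

Definition inK (R : realType) (F : Kfield) (q : quat R) : bool :=
  match F with
  | Kreal => [&& qi q == 0, qj q == 0 & qk q == 0]
  | Kcomplex => (qj q == 0) && (qk q == 0)
  | Kquat => true
  end.

Definition Kmx (R : realType) (F : Kfield) (p q : nat) (M : 'M[quat R]_(p, q)) :=
  forall i j, inK F (M i j).

Definition qconj (R : realType) (q : quat R) : quat R :=
  Quat (qre q) (- qi q) (- qj q) (- qk q).
Definition adj (R : realType) (p q : nat) (M : 'M[quat R]_(p, q)) : 'M[quat R]_(q, p) :=
  (map_mx (@qconj R) M)^T.

Definition unitaryK (R : realType) (F : Kfield) (l : nat) (g : 'M[quat R]_l) :=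
  Kmx F g /\ adj g *m g = 1%:M.

Definition StiefelK (R : realType) (F : Kfield) (n k : nat) (x : 'M[quat R]_(n, k)) :=
  Kmx F x /\ adj x *m x = 1%:M.

Definition Kspan (R : realType) (F : Kfield) (n m : nat) (b : 'M[quat R]_(n, m))
    : 'cV[quat R]_n -> Prop :=
  fun v => exists c : 'cV[quat R]_m, Kmx F c /\ v = b *m c.

(* eta is an element of G_{n,m}: a K-subspace of K^n of K-dimension m, i.e. *)
(* it has a basis of m vectors (the K-linearly independent columns of b).   *)
Definition GrassK (R : realType) (F : Kfield) (n m : nat) (eta : 'cV[quat R]_n -> Prop) :=
  exists b : 'M[quat R]_(n, m),
    [/\ Kmx F b,
        (forall c : 'cV[quat R]_m, Kmx F c -> b *m c = 0 -> c = 0) &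
        forall v, eta v <-> Kspan F b v].

Definition imgsp (R : realType) (n : nat) (g : 'M[quat R]_n) (V : 'cV[quat R]_n -> Prop)
    : 'cV[quat R]_n -> Prop :=
  fun v => exists w, V w /\ v = g *m w.

Definition is_orth_proj (R : realType) (F : Kfield) (n : nat)
    (eta : 'cV[quat R]_n -> Prop) (P : 'M[quat R]_n) :=
  forall v : 'cV[quat R]_n, Kmx F v ->
    eta (P *m v) /\ (forall w, eta w -> adj w *m (v - P *m v) = 0).

Definition Pproj (R : realType) (F : Kfield) (n : nat) (eta : 'cV[quat R]_n -> Prop)
    : 'M[quat R]_n :=
  epsilon (inhabits 0) (is_orth_proj F eta).

Definition Cos2 (R : realType) (F : Kfield) (n k : nat) (eta : 'cV[quat R]_n -> Prop)
    (x : 'M[quat R]_(n, k)) : 'M[quat R]_k :=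
  adj x *m Pproj F eta *m x.

Definition psdK (R : realType) (F : Kfield) (k : nat) (r : 'M[quat R]_k) :=
  [/\ Kmx F r, adj r = r &
      forall c : 'cV[quat R]_k, Kmx F c -> 0 <= qre ((adj c *m r *m c) ord0 ord0)].

Definition psd_sqrt (R : realType) (F : Kfield) (k : nat) (r : 'M[quat R]_k)
    : 'M[quat R]_k :=
  epsilon (inhabits 0) (fun s => psdK F s /\ s *m s = r).

Definition mxget (R : realType) (p q : nat) (M : 'M[quat R]_(p, q)) (i j : nat) : quat R :=
  match (insub i : option 'I_p), (insub j : option 'I_q) with
  | Some i', Some j' => M i' j'
  | _, _ => 0
  end.

Definition xhat0 (R : realType) (n k : nat) : 'M[quat R]_(n, k) :=
  \matrix_(i < n, j < k) mxget (col_mx (0 : 'M[quat R]_(n - k, k)) 1%:M) i j.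

Definition y0 (R : realType) (n k' : nat) : 'M[quat R]_(n, k') :=
  \matrix_(i < n, j < k') mxget (col_mx (1%:M : 'M[quat R]_k') (0 : 'M_(n - k', k'))) i j.
Definition eta0 (R : realType) (F : Kfield) (n k' : nat) : 'cV[quat R]_n -> Prop :=
  Kspan F (y0 R n k').

Definition inKgrp (R : realType) (F : Kfield) (n k : nat) (rho : 'M[quat R]_n) :=
  exists (alpha : 'M[quat R]_(n - k)) (delta : 'M[quat R]_k),
    [/\ unitaryK F alpha, unitaryK F delta &
        rho = \matrix_(i < n, j < n) mxget (block_mx alpha 0 0 delta) i j].

(* j(a), block matrix w.r.t. K^n = K^{k'-k} (+) K^k (+) K^{n-k'-k} (+) K^k *)
Definition jmat (R : realType) (F : Kfield) (n k k' : nat) (a : 'M[quat R]_k)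
    : 'M[quat R]_n :=
  let S1 := psd_sqrt F (1%:M - adj a *m a) in
  let S2 := psd_sqrt F (1%:M - a *m adj a) in
  \matrix_(i < n, j < n) mxget
    (block_mx
       (block_mx (1%:M : 'M[quat R]_(k' - k)) 0 0 S1)
       (block_mx (0 : 'M[quat R]_(k' - k, n - k' - k)) 0 0 (adj a))
       (block_mx (0 : 'M[quat R]_(n - k' - k, k' - k)) 0 0 (- a))
       (block_mx (1%:M : 'M[quat R]_(n - k' - k)) 0 0 S2)) i j.

Arguments GrassK {R} F n m eta.
Arguments eta0 {R} F n k' _.
Arguments inKgrp {R} F n k rho.
Arguments jmat {R} F n k k' a.

(* Main.v *)
Require Import Defs.
From HB Require Import structures.
From mathcomp Require Import all_boot all_order all_algebra.
From mathcomp Require Import reals.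
From mathcomp Require Import ring lra zify.
From Stdlib Require Import ClassicalEpsilon.
Set Implicit Arguments. Unset Strict Implicit. Unset Printing Implicit Defensive.
Import Order.TTheory GRing.Theory Num.Theory.
Local Open Scope ring_scope.

Section QuatBasics.
Variable R : realType.
Local Notation H := (quat R).

Lemma quatP (p q : H) : qre p = qre q -> qi p = qi q -> qj p = qj q -> qk p = qk q -> p = q.
Proof. by case: p; case: q => /= ? ? ? ? ? ? ? ? -> -> -> ->. Qed.

Lemma qaddE (p q : H) : p + q = Quat (qre p + qre q) (qi p + qi q) (qj p + qj q) (qk p + qk q).
Proof. by []. Qed.
Lemma qmulE (p q : H) : p * q = qmul p q.
Proof. by []. Qed.
Lemma qoppE (p : H) : - p = Quat (- qre p) (- qi p) (- qj p) (- qk p).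
Proof. by []. Qed.
Lemma q0E : (0 : H) = Quat 0 0 0 0. Proof. by []. Qed.
Lemma q1E : (1 : H) = Quat 1 0 0 0. Proof. by []. Qed.

Lemma qre_sum I (r : seq I) (P : pred I) (f : I -> H) :
  qre (\sum_(i <- r | P i) f i) = \sum_(i <- r | P i) qre (f i).
Proof. by apply: (big_morph (@qre R)). Qed.
Lemma qi_sum I (r : seq I) (P : pred I) (f : I -> H) :
  qi (\sum_(i <- r | P i) f i) = \sum_(i <- r | P i) qi (f i).
Proof. by apply: (big_morph (@qi R)). Qed.
Lemma qj_sum I (r : seq I) (P : pred I) (f : I -> H) :
  qj (\sum_(i <- r | P i) f i) = \sum_(i <- r | P i) qj (f i).
Proof. by apply: (big_morph (@qj R)). Qed.
Lemma qk_sum I (r : seq I) (P : pred I) (f : I -> H) :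
  qk (\sum_(i <- r | P i) f i) = \sum_(i <- r | P i) qk (f i).
Proof. by apply: (big_morph (@qk R)). Qed.

Definition rq (x : R) : H := Quat x 0 0 0.

Lemma rqD x y : rq (x + y) = rq x + rq y.
Proof. by apply: quatP => /=; ring. Qed.
Lemma rqN x : rq (- x) = - rq x.
Proof. by apply: quatP => /=; ring. Qed.
Lemma rqB x y : rq (x - y) = rq x - rq y.
Proof. by rewrite rqD rqN. Qed.
Lemma rqM x y : rq (x * y) = rq x * rq y.
Proof. by apply: quatP => /=; ring. Qed.
Lemma rq0 : rq 0 = 0. Proof. by []. Qed.
Lemma rq1 : rq 1 = 1. Proof. by []. Qed.
Lemma rqC x (q : H) : rq x * q = q * rq x.
Proof. by apply: quatP => /=; ring. Qed.
Lemma rq_sum I (r : seq I) (P : pred I) (f : I -> R) :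
  rq (\sum_(i <- r | P i) f i) = \sum_(i <- r | P i) rq (f i).
Proof. by apply: (big_morph rq rqD rq0). Qed.
Lemma rq_inj : injective rq.
Proof. by move=> x y []. Qed.
Lemma rqV x : x != 0 -> rq x^-1 * rq x = 1.
Proof. by move=> nx; rewrite -rqM mulVf. Qed.
Lemma rqVr x : x != 0 -> rq x * rq x^-1 = 1.
Proof. by move=> nx; rewrite -rqM mulfV. Qed.
Lemma qre_rqM x (q : H) : qre (rq x * q) = x * qre q.
Proof. by rewrite /=; ring. Qed.

Lemma qconjK : involutive (@qconj R).
Proof. by move=> q; apply: quatP => /=; ring. Qed.
Lemma qconjD (p q : H) : qconj (p + q) = qconj p + qconj q.
Proof. by apply: quatP => /=; ring. Qed.
Lemma qconjN (p : H) : qconj (- p) = - qconj p.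
Proof. by apply: quatP => /=; ring. Qed.
Lemma qconjB (p q : H) : qconj (p - q) = qconj p - qconj q.
Proof. by rewrite qconjD qconjN. Qed.
Lemma qconj0 : qconj (0 : H) = 0.
Proof. by apply: quatP => /=; ring. Qed.
Lemma qconj1 : qconj (1 : H) = 1.
Proof. by apply: quatP => /=; ring. Qed.
Lemma qconjM (p q : H) : qconj (p * q) = qconj q * qconj p.
Proof. by apply: quatP => /=; ring. Qed.
Lemma qconj_rq x : qconj (rq x) = rq x.
Proof. by apply: quatP => /=; ring. Qed.
Lemma qconj_sum I (r : seq I) (P : pred I) (f : I -> H) :
  qconj (\sum_(i <- r | P i) f i) = \sum_(i <- r | P i) qconj (f i).
Proof. by apply: (big_morph (@qconj R) qconjD qconj0). Qed.

Definition qn2 (q : H) : R := qre q ^+ 2 + qi q ^+ 2 + qj q ^+ 2 + qk q ^+ 2.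
Lemma qn2_ge0 q : 0 <= qn2 q.
Proof. by rewrite /qn2 !addr_ge0 ?sqr_ge0. Qed.
Lemma qn2_eq0 q : qn2 q = 0 -> q = 0.
Proof.
rewrite /qn2 => h.
have h1 := sqr_ge0 (qre q); have h2 := sqr_ge0 (qi q).
have h3 := sqr_ge0 (qj q); have h4 := sqr_ge0 (qk q).
apply: quatP => /=; apply/eqP; rewrite -sqrf_eq0; apply/eqP; lra.
Qed.
Lemma qconj_mulq (q : H) : qconj q * q = rq (qn2 q).
Proof. by apply: quatP => /=; rewrite /qn2; ring. Qed.
Lemma qmul_conjq (q : H) : q * qconj q = rq (qn2 q).
Proof. by apply: quatP => /=; rewrite /qn2; ring. Qed.
Lemma qn2_rq x : qn2 (rq x) = x ^+ 2.
Proof. by rewrite /qn2 /=; ring. Qed.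

Variable F : Kfield.
Lemma inK0 : inK F (0 : H). Proof. by case: F => //=; rewrite eqxx. Qed.
Lemma inK1 : inK F (1 : H). Proof. by case: F => //=; rewrite eqxx. Qed.
Lemma inK_rq x : inK F (rq x). Proof. by case: F => //=; rewrite eqxx. Qed.
Lemma inKD (p q : H) : inK F p -> inK F q -> inK F (p + q).
Proof.
case: F => //=.
  by move=> /and3P[/eqP-> /eqP-> /eqP->] /and3P[/eqP-> /eqP-> /eqP->]; rewrite !addr0 eqxx.
by move=> /andP[/eqP-> /eqP->] /andP[/eqP-> /eqP->]; rewrite !addr0 eqxx.
Qed.
Lemma inKN (p : H) : inK F p -> inK F (- p).
Proof.
case: F => //=.
  by move=> /and3P[/eqP-> /eqP-> /eqP->]; rewrite !oppr0 eqxx.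
by move=> /andP[/eqP-> /eqP->]; rewrite !oppr0 eqxx.
Qed.
Lemma inKB (p q : H) : inK F p -> inK F q -> inK F (p - q).
Proof. by move=> hp hq; apply: inKD => //; apply: inKN. Qed.
Lemma inKM (p q : H) : inK F p -> inK F q -> inK F (p * q).
Proof.
case: F => //=; case: p => a b c d; case: q => a' b' c' d' /=.
  by move=> /and3P[/eqP-> /eqP-> /eqP->] /and3P[/eqP-> /eqP-> /eqP->]; apply/and3P; split; apply/eqP; ring.
by move=> /andP[/eqP-> /eqP->] /andP[/eqP-> /eqP->]; apply/andP; split; apply/eqP; ring.
Qed.
Lemma inK_conj (p : H) : inK F p -> inK F (qconj p).
Proof.
case: F => //=.
  by move=> /and3P[/eqP-> /eqP-> /eqP->]; rewrite !oppr0 eqxx.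
by move=> /andP[/eqP-> /eqP->]; rewrite !oppr0 eqxx.
Qed.
Lemma inK_sum I (r : seq I) (P : pred I) (f : I -> H) :
  (forall i, P i -> inK F (f i)) -> inK F (\sum_(i <- r | P i) f i).
Proof. by move=> h; apply: (big_ind (inK F)) => //; [exact: inK0 | exact: inKD]. Qed.

End QuatBasics.

Section MxBasics.
Variable R : realType.
Local Notation H := (quat R).

Lemma adjE m n (A : 'M[H]_(m, n)) i j : adj A i j = qconj (A j i).
Proof. by rewrite /adj !mxE. Qed.
Lemma adjK m n (A : 'M[H]_(m, n)) : adj (adj A) = A.
Proof. by apply/matrixP => i j; rewrite !adjE qconjK. Qed.
Lemma adj_mul m n p (A : 'M[H]_(m, n)) (B : 'M[H]_(n, p)) :
  adj (A *m B) = adj B *m adj A.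
Proof.
apply/matrixP => i j; rewrite adjE !mxE qconj_sum; apply: eq_bigr => l _.
by rewrite qconjM !adjE.
Qed.


Lemma adjD m n (A B : 'M[H]_(m, n)) : adj (A + B) = adj A + adj B.
Proof. by apply/matrixP => i j; rewrite /adj !mxE qconjD. Qed.
Lemma adjN m n (A : 'M[H]_(m, n)) : adj (- A) = - adj A.
Proof. by apply/matrixP => i j; rewrite /adj !mxE qconjN. Qed.
Lemma adjB m n (A B : 'M[H]_(m, n)) : adj (A - B) = adj A - adj B.
Proof. by rewrite adjD adjN. Qed.
Lemma adj0 m n : adj (0 : 'M[H]_(m, n)) = 0.
Proof. by apply/matrixP => i j; rewrite /adj !mxE qconj0. Qed.
Lemma adj_scalar n (a : H) : adj (a%:M : 'M_n) = (qconj a)%:M.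
Proof.
apply/matrixP => i j; rewrite /adj !mxE.
by case: (i =P j) => [->|/eqP ne]; rewrite ?eqxx ?mulr1n // eq_sym (negPf ne) !mulr0n qconj0.
Qed.
Lemma adj1 n : adj (1%:M : 'M[H]_n) = 1%:M.
Proof. by rewrite adj_scalar qconj1. Qed.
Lemma adj_col_mx m1 m2 n (A : 'M[H]_(m1, n)) (B : 'M[H]_(m2, n)) :
  adj (col_mx A B) = row_mx (adj A) (adj B).
Proof. by rewrite /adj map_col_mx tr_col_mx. Qed.
Lemma adj_row_mx m n1 n2 (A : 'M[H]_(m, n1)) (B : 'M[H]_(m, n2)) :
  adj (row_mx A B) = col_mx (adj A) (adj B).
Proof. by rewrite /adj map_row_mx tr_row_mx. Qed.
Lemma adj_block_mx m1 m2 n1 n2 (A : 'M[H]_(m1, n1)) (B : 'M[H]_(m1, n2))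
  (C : 'M[H]_(m2, n1)) (D : 'M[H]_(m2, n2)) :
  adj (block_mx A B C D) = block_mx (adj A) (adj C) (adj B) (adj D).
Proof. by rewrite /adj map_block_mx tr_block_mx. Qed.
Lemma adj_scale_rq m n x (A : 'M[H]_(m, n)) : adj (rq x *: A) = rq x *: adj A.
Proof. by apply/matrixP => i j; rewrite /adj !mxE qconjM qconj_rq rqC. Qed.

Lemma mulmx_scale_rq m n p x (A : 'M[H]_(m, n)) (B : 'M[H]_(n, p)) :
  A *m (rq x *: B) = rq x *: (A *m B).
Proof.
apply/matrixP => i j; rewrite !mxE mulr_sumr; apply: eq_bigr => l _.
by rewrite !mxE mulrA -rqC mulrA.
Qed.
Lemma mul_mx_rq m n x (A : 'M[H]_(m, n)) : A *m (rq x)%:M = rq x *: A.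
Proof. by rewrite -scalemx1 mulmx_scale_rq mulmx1. Qed.
Lemma scale_rqA m n x y (A : 'M[H]_(m, n)) : rq x *: (rq y *: A) = rq (x * y) *: A.
Proof. by rewrite scalerA rqM. Qed.

Variable F : Kfield.
Lemma Kmx0 m n : Kmx F (0 : 'M[H]_(m, n)).
Proof. by move=> i j; rewrite mxE; exact: inK0. Qed.
Lemma Kmx_scalar n (a : H) : inK F a -> Kmx F (a%:M : 'M_n).
Proof. by move=> ha i j; rewrite !mxE; case: (i == j); rewrite ?mulr1n ?mulr0n //; exact: inK0. Qed.
Lemma Kmx1 n : Kmx F (1%:M : 'M[H]_n).
Proof. exact/Kmx_scalar/inK1. Qed.
Lemma KmxD m n (A B : 'M[H]_(m, n)) : Kmx F A -> Kmx F B -> Kmx F (A + B).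
Proof. by move=> hA hB i j; rewrite mxE; apply: inKD. Qed.
Lemma KmxN m n (A : 'M[H]_(m, n)) : Kmx F A -> Kmx F (- A).
Proof. by move=> hA i j; rewrite mxE; apply: inKN. Qed.
Lemma KmxB m n (A B : 'M[H]_(m, n)) : Kmx F A -> Kmx F B -> Kmx F (A - B).
Proof. by move=> hA hB; apply: KmxD => //; apply: KmxN. Qed.
Lemma KmxM m n p (A : 'M[H]_(m, n)) (B : 'M[H]_(n, p)) :
  Kmx F A -> Kmx F B -> Kmx F (A *m B).
Proof. by move=> hA hB i j; rewrite mxE; apply: inK_sum => l _; apply: inKM. Qed.
Lemma Kmx_adj m n (A : 'M[H]_(m, n)) : Kmx F A -> Kmx F (adj A).
Proof. by move=> hA i j; rewrite adjE; apply: inK_conj. Qed.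
Lemma Kmx_scale m n (a : H) (A : 'M[H]_(m, n)) : inK F a -> Kmx F A -> Kmx F (a *: A).
Proof. by move=> ha hA i j; rewrite mxE; apply: inKM. Qed.
Lemma Kmx_scale_rq m n x (A : 'M[H]_(m, n)) : Kmx F A -> Kmx F (rq x *: A).
Proof. by apply: Kmx_scale; apply: inK_rq. Qed.
Lemma Kmx_col_mx m1 m2 n (A : 'M[H]_(m1, n)) (B : 'M[H]_(m2, n)) :
  Kmx F A -> Kmx F B -> Kmx F (col_mx A B).
Proof. by move=> hA hB i j; rewrite -(splitK i); case: (split i) => i' /=; rewrite ?col_mxEu ?col_mxEd. Qed.
Lemma Kmx_row_mx m n1 n2 (A : 'M[H]_(m, n1)) (B : 'M[H]_(m, n2)) :
  Kmx F A -> Kmx F B -> Kmx F (row_mx A B).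
Proof. by move=> hA hB i j; rewrite -(splitK j); case: (split j) => j' /=; rewrite ?row_mxEl ?row_mxEr. Qed.
Lemma Kmx_block_mx m1 m2 n1 n2 (A : 'M[H]_(m1, n1)) (B : 'M[H]_(m1, n2))
  (C : 'M[H]_(m2, n1)) (D : 'M[H]_(m2, n2)) :
  Kmx F A -> Kmx F B -> Kmx F C -> Kmx F D -> Kmx F (block_mx A B C D).
Proof. by move=> *; apply: Kmx_col_mx; apply: Kmx_row_mx. Qed.
Lemma Kmx_usub m1 m2 n (A : 'M[H]_(m1 + m2, n)) : Kmx F A -> Kmx F (usubmx A).
Proof. by move=> hA i j; rewrite mxE. Qed.
Lemma Kmx_dsub m1 m2 n (A : 'M[H]_(m1 + m2, n)) : Kmx F A -> Kmx F (dsubmx A).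
Proof. by move=> hA i j; rewrite mxE. Qed.
Lemma Kmx_lsub m n1 n2 (A : 'M[H]_(m, n1 + n2)) : Kmx F A -> Kmx F (lsubmx A).
Proof. by move=> hA i j; rewrite mxE. Qed.
Lemma Kmx_rsub m n1 n2 (A : 'M[H]_(m, n1 + n2)) : Kmx F A -> Kmx F (rsubmx A).
Proof. by move=> hA i j; rewrite mxE. Qed.
Lemma Kmx_castmx m n m' n' (e : (m = m') * (n = n')) (A : 'M[H]_(m, n)) :
  Kmx F A -> Kmx F (castmx e A).
Proof. by move=> hA i j; rewrite castmxE. Qed.
Lemma Kmx_delta m n (i0 : 'I_m) (j0 : 'I_n) : Kmx F (delta_mx i0 j0 : 'M[H]_(m, n)).
Proof. by move=> i j; rewrite mxE; case: (_ && _); [exact: inK1 | exact: inK0]. Qed.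

Definition vnorm2 n (c : 'cV[H]_n) : R := \sum_i qn2 (c i 0).
Lemma adj_vec n (c : 'cV[H]_n) : adj c *m c = (rq (vnorm2 c))%:M.
Proof.
apply/matrixP => i j; rewrite !ord1 !mxE /= mulr1n rq_sum.
by apply: eq_bigr => l _; rewrite adjE qconj_mulq.
Qed.
Lemma vnorm2_ge0 n (c : 'cV[H]_n) : 0 <= vnorm2 c.
Proof. by apply: sumr_ge0 => i _; apply: qn2_ge0. Qed.
Lemma vnorm2_eq0 n (c : 'cV[H]_n) : vnorm2 c = 0 -> c = 0.
Proof.
move=> /eqP; rewrite psumr_eq0 => [/allP h|i _]; last exact: qn2_ge0.
apply/matrixP => i j; rewrite ord1 mxE; apply: qn2_eq0; apply/eqP.
by apply: h; rewrite mem_index_enum.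
Qed.
Lemma vnorm2_scale n x (c : 'cV[H]_n) : vnorm2 (rq x *: c) = x ^+ 2 * vnorm2 c.
Proof.
rewrite /vnorm2 mulr_sumr; apply: eq_bigr => i _; rewrite mxE /qn2 /=; ring.
Qed.
Lemma adj_vec0 n (c : 'cV[H]_n) : adj c *m c = 0 -> c = 0.
Proof.
rewrite adj_vec => /matrixP /(_ 0 0); rewrite !mxE /= mulr1n => /(congr1 (@qre R)) /= h.
exact: vnorm2_eq0.
Qed.

End MxBasics.

Section Red.
Variable R : realType.
Local Notation H := (quat R).
Variable F : Kfield.

Definition unit2 n (U : 'M[H]_n) := [/\ Kmx F U, adj U *m U = 1%:M & U *m adj U = 1%:M].

Lemma unit2_1 n : unit2 (1%:M : 'M[H]_n).
Proof. by split; rewrite ?adj1 ?mulmx1 //; apply: Kmx1. Qed.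
Lemma unit2_mul n (U V : 'M[H]_n) : unit2 U -> unit2 V -> unit2 (U *m V).
Proof.
move=> [hU aU bU] [hV aV bV]; split; first exact: KmxM.
  by rewrite adj_mul -mulmxA (mulmxA (adj U)) aU mul1mx.
by rewrite adj_mul -mulmxA (mulmxA V) bV mul1mx.
Qed.
Lemma unit2_adj n (U : 'M[H]_n) : unit2 U -> unit2 (adj U).
Proof. by move=> [hU aU bU]; split; rewrite ?adjK //; apply: Kmx_adj. Qed.
Lemma unit2_block m n (U : 'M[H]_m) (V : 'M[H]_n) :
  unit2 U -> unit2 V -> unit2 (block_mx U 0 0 V).
Proof.
move=> [hU aU bU] [hV aV bV]; split.
- by apply: Kmx_block_mx => //; apply: Kmx0.
- by rewrite adj_block_mx !adj0 mulmx_block !mulmx0 !mul0mx !addr0 !add0r aU aV -scalar_mx_block.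
- by rewrite adj_block_mx !adj0 mulmx_block !mulmx0 !mul0mx !addr0 !add0r bU bV -scalar_mx_block.
Qed.

Lemma adj11 (a : 'M[H]_1) : adj a = (qconj (a 0 0))%:M.
Proof. by rewrite {1}[a]mx11_scalar adj_scalar. Qed.

Lemma scalar_mxM1 (a b : H) : (a%:M : 'M_1) *m b%:M = (a * b)%:M.
Proof. by rewrite scalar_mxM. Qed.

Definition vnorm n (c : 'cV[H]_n) : R := Num.sqrt (vnorm2 c).
Lemma vnorm_ge0 n (c : 'cV[H]_n) : 0 <= vnorm c.
Proof. exact: sqrtr_ge0. Qed.
Lemma vnorm_sq n (c : 'cV[H]_n) : vnorm c ^+ 2 = vnorm2 c.
Proof. by rewrite sqr_sqrtr // vnorm2_ge0. Qed.

Lemma red m (c : 'cV[H]_(1 + m)) : Kmx F c ->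
  exists U : 'M[H]_(1 + m), unit2 U /\ U *m c = col_mx (rq (vnorm c))%:M 0.
Proof.
move=> Kc.
set s := vnorm c.
have [s0|s0] := eqVneq s 0.
  exists 1%:M; split; first exact: unit2_1.
  have : vnorm2 c = 0 by rewrite -vnorm_sq -/s s0 expr0n.
  by move/vnorm2_eq0 => ->; rewrite mul1mx s0 rq0 raddf0 col_mx0.
set c1m := usubmx c; set c2 := dsubmx c.
have cE : c = col_mx c1m c2 by rewrite /c1m /c2 vsubmxK.
set c1 := c1m 0 0.
have Kc1 : inK F c1 by apply: Kmx_usub.
set t := Num.sqrt (qn2 c1).
have [u [Ku uu1 uu2 cu]] : exists u : H,
    [/\ inK F u, qconj u * u = 1, u * qconj u = 1 & qconj c1 * u = rq t].
  have [t0|t0] := eqVneq t 0.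
    exists 1; split; rewrite ?qconj1 ?mulr1 //; first exact: inK1.
    have : qn2 c1 = 0.
      have h := qn2_ge0 c1.
      have : qn2 c1 <= 0 by rewrite -sqrtr_eq0 -/t t0.
      lra.
    by move/qn2_eq0 => ->; rewrite qconj0 t0.
  have t2 : t ^+ 2 = qn2 c1 by rewrite sqr_sqrtr // qn2_ge0.
  exists (c1 * rq t^-1); split.
  - by apply: inKM => //; apply: inK_rq.
  - rewrite qconjM qconj_rq -mulrA (mulrA (qconj c1)) qconj_mulq -t2 -!rqM -rq1; congr rq.
    by field.
  - rewrite qconjM qconj_rq -mulrA (mulrA (rq _)) -rqM rqC mulrA qmul_conjq -rqM -t2 -rq1.
    by congr rq; field.
  - rewrite mulrA qconj_mulq -rqM -t2; congr rq; by field.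
pose lam := u * rq s.
pose e : 'cV[H]_(1 + m) := col_mx lam%:M 0.
have Ke : Kmx F e.
  apply: Kmx_col_mx; last exact: Kmx0.
  by apply: Kmx_scalar; apply: inKM => //; apply: inK_rq.
have c1mE : c1m = c1%:M by rewrite {1}[c1m]mx11_scalar.
have ss : s ^+ 2 = vnorm2 c by rewrite vnorm_sq.
have hce : adj c *m e = (rq (t * s))%:M.
  rewrite cE adj_col_mx mul_row_col mulmx0 addr0 c1mE adj_scalar scalar_mxM1.
  by rewrite /lam mulrA cu rqM.
have hec : adj e *m c = (rq (t * s))%:M.
  by have := congr1 (@adj R _ _) hce; rewrite adj_mul adjK adj_scalar qconj_rq.
have hee : adj e *m e = (rq (s ^+ 2))%:M.
  rewrite adj_col_mx mul_row_col mulmx0 addr0 adj_scalar scalar_mxM1.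
  rewrite /lam qconjM qconj_rq mulrA -(mulrA _ _ u) uu1 mulr1 -rqM; congr (rq _)%:M.
have hcc : adj c *m c = (rq (s ^+ 2))%:M.
  by rewrite adj_vec ss.
pose w := c - e.
have Kw : Kmx F w by apply: KmxB.
have hwc : adj w *m c = (rq (s ^+ 2 - t * s))%:M.
  by rewrite /w adjB mulmxBl hcc hec rqB raddfB.
have hww : adj w *m w = (rq (2 * (s ^+ 2 - t * s)))%:M.
  rewrite /w adjB mulmxBl !mulmxBr hcc hec hce hee -!raddfB -!rqB.
  by congr (rq _)%:M; ring.
pose D : 'M[H]_(1 + m) := block_mx (qconj u)%:M 0 0 1%:M.
have uD : unit2 D.
  apply: unit2_block; last exact: unit2_1.
  split; rewrite ?adj_scalar ?qconjK ?scalar_mxM1 ?uu1 ?uu2 //.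
  by apply: Kmx_scalar; apply: inK_conj.
have De : D *m e = col_mx (rq s)%:M 0.
  rewrite mul_block_col !mulmx0 !mul0mx !addr0 scalar_mxM1 /lam mulrA.
  by rewrite uu1 mul1r.
set ww := 2 * (s ^+ 2 - t * s).
have [w0|w0] := eqVneq ww 0.
  have : w = 0.
    apply: vnorm2_eq0; move: hww; rewrite adj_vec -/ww w0.
    by move/matrixP/(_ 0 0); rewrite !mxE /= => -[].
  move/eqP; rewrite subr_eq0 => /eqP we.
  by exists D; split => //; rewrite we De.
pose Hh : 'M[H]_(1 + m) := 1%:M - rq (2 / ww) *: (w *m adj w).
have aHh : adj Hh = Hh.
  by rewrite /Hh adjB adj1 adj_scale_rq adj_mul adjK.
have HhHh : Hh *m Hh = 1%:M.
  set M := w *m adj w.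
  have MM : M *m M = rq ww *: M.
    by rewrite /M mulmxA -(mulmxA w) hww mul_mx_rq -scalemxAl.
  rewrite /Hh mulmxBl mul1mx mulmxBr mulmx1 -scalemxAl mulmx_scale_rq MM.
  have -> : rq (2 / ww) *: (rq (2 / ww) *: (rq ww *: M)) =
      rq (2 / ww) *: M + rq (2 / ww) *: M.
    rewrite !scale_rqA -scalerDl -rqD; congr (rq _ *: _).
    by field.
  by rewrite opprB addrK subrK.
have uHh : unit2 Hh.
  split; rewrite ?aHh //.
  apply: KmxB; first exact: Kmx1.
  by apply: Kmx_scale_rq; apply: KmxM => //; apply: Kmx_adj.
have Hhc : Hh *m c = e.
  rewrite /Hh mulmxBl mul1mx -scalemxAl -mulmxA hwc mul_mx_rq scale_rqA.
  have w1 : s ^+ 2 - t * s != 0 by apply: contra w0 => /eqP h; rewrite /ww h mulr0.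
  have -> : 2 / ww * (s ^+ 2 - t * s) = 1 by rewrite /ww; field; rewrite w1.
  by rewrite scale1r /w opprB addrC subrK.
exists (D *m Hh); split; first exact: unit2_mul.
by rewrite -mulmxA Hhc De.
Qed.


Lemma row_mx_eq0 m n1 n2 (A : 'M[H]_(m, n1)) (B : 'M[H]_(m, n2)) :
  row_mx A B = 0 -> A = 0 /\ B = 0.
Proof. by rewrite -row_mx0 => /eq_row_mx. Qed.

Lemma vnorm2_eq n (a b : 'cV[H]_n) : adj a *m a = adj b *m b -> vnorm2 a = vnorm2 b.
Proof.
rewrite !adj_vec => /matrixP /(_ 0 0); rewrite !mxE /= !mulr1n.
by move/(congr1 (@qre R)).
Qed.

Lemma uext p m (A B : 'M[H]_(m, p)) : Kmx F A -> Kmx F B ->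
  adj A *m A = adj B *m B -> exists U, unit2 U /\ A = U *m B.
Proof.
elim: p m A B => [|p IH] m A B KA KB G.
  exists 1%:M; split; first exact: unit2_1.
  by rewrite mul1mx; apply/matrixP => i [].
move: A B KA KB G; change p.+1 with (1 + p) => A B KA KB G.
set a := lsubmx A; set A2 := rsubmx A.
set b := lsubmx B; set B2 := rsubmx B.
have AE : A = row_mx a A2 by rewrite /a /A2 hsubmxK.
have BE : B = row_mx b B2 by rewrite /b /B2 hsubmxK.
have Ka : Kmx F a by apply: Kmx_lsub.
have KA2 : Kmx F A2 by apply: Kmx_rsub.
have Kb : Kmx F b by apply: Kmx_lsub.
have KB2 : Kmx F B2 by apply: Kmx_rsub.
move: G; rewrite AE BE !adj_row_mx !mul_col_row => /eq_block_mx [Gaa GaA _ GAA].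
have [a0|a0] := eqVneq (vnorm2 a) 0.
  have a0' : a = 0 by apply: vnorm2_eq0.
  have b0 : b = 0.
    by apply: adj_vec0; rewrite -Gaa a0' mulmx0.
  have [U [uU hU]] := IH m A2 B2 KA2 KB2 GAA.
  exists U; split => //.
  by rewrite mul_mx_row a0' b0 mulmx0 hU.
case: m A B KA KB a A2 b B2 AE BE Ka KA2 Kb KB2 Gaa GaA GAA a0 => [|m] A B KA KB a A2 b B2 AE BE Ka KA2 Kb KB2 Gaa GaA GAA a0.
  by move: a0; rewrite /vnorm2 big_ord0 eqxx.
have [Ua [uUa hUa]] := @red (m) a Ka.
have [Ub [uUb hUb]] := @red (m) b Kb.
have nab : vnorm a = vnorm b by rewrite /vnorm (vnorm2_eq Gaa).
set s := vnorm a.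
have s0 : s != 0.
  apply: contra a0 => /eqP h; apply/eqP.
  by rewrite -vnorm_sq -/s h expr0n.
rewrite -nab -/s in hUb.
have [[KUa aUa bUa] [KUb aUb bUb]] := (uUa, uUb).
set C := (Ua *m A2 : 'M_(1 + m, p)).
set D := (Ub *m B2 : 'M_(1 + m, p)).
set r1 := usubmx C; set C2 := dsubmx C.
set s1 := usubmx D; set D2 := dsubmx D.
have CE : C = col_mx r1 C2 by rewrite /r1 /C2 vsubmxK.
have DE : D = col_mx s1 D2 by rewrite /s1 /D2 vsubmxK.
have KC2 : Kmx F C2 by apply: Kmx_dsub; apply: KmxM.
have KD2 : Kmx F D2 by apply: Kmx_dsub; apply: KmxM.
pose e : 'cV[H]_(1 + m) := col_mx (rq s)%:M 0.
have Ha : forall X : 'M_(1 + m, p), adj (Ua *m a) *m (Ua *m X) = adj a *m X.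
  by move=> X; rewrite adj_mul -mulmxA (mulmxA (adj Ua)) aUa mul1mx.
have Hb : forall X : 'M_(1 + m, p), adj (Ub *m b) *m (Ub *m X) = adj b *m X.
  by move=> X; rewrite adj_mul -mulmxA (mulmxA (adj Ub)) aUb mul1mx.
have eX : forall X : 'M_(1 + m, p), adj e *m X = rq s *: usubmx X.
  move=> X; rewrite -{1}[X]vsubmxK /e adj_col_mx mul_row_col adj0 mul0mx addr0.
  by rewrite adj_scalar qconj_rq mul_scalar_mx.
have r1s1 : r1 = s1.
  have := Ha A2; rewrite GaA -Hb hUa hUb !eX -/C -/D => h.
  have := congr1 (fun X => rq s^-1 *: X) h; rewrite !scale_rqA mulVf //.
  by rewrite rq1 !scale1r.
have CD : adj C2 *m C2 = adj D2 *m D2.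
  have h1 : adj C *m C = adj A2 *m A2.
    by rewrite /C adj_mul -mulmxA (mulmxA (adj Ua)) aUa mul1mx.
  have h2 : adj D *m D = adj B2 *m B2.
    by rewrite /D adj_mul -mulmxA (mulmxA (adj Ub)) aUb mul1mx.
  move: h1 h2; rewrite CE DE !adj_col_mx !mul_row_col GAA r1s1 => h1 h2.
  by apply: (addrI (adj s1 *m s1)); rewrite h1 h2.
have [V [uV hV]] := IH m C2 D2 KC2 KD2 CD.
pose U0 : 'M[H]_(1 + m) := block_mx 1%:M 0 0 V.
exists (adj Ua *m U0 *m Ub); split.
  apply: unit2_mul => //; apply: unit2_mul; first exact: unit2_adj.
  exact: (unit2_block (unit2_1 1) uV).
rewrite -!mulmxA mul_mx_row hUb.
have -> : Ub *m B2 = D by [].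
rewrite DE -r1s1 mul_mx_row /U0 !mul_block_col !(mulmx0, mul0mx, addr0, add0r, mul1mx) -hV -CE.
by rewrite -hUa /C -mul_mx_row mulmxA aUa mul1mx.
Qed.

End Red.

Section GS.
Variable R : realType.
Local Notation H := (quat R).
Variable F : Kfield.

Lemma col_mx_eq0 m1 m2 n (A : 'M[H]_(m1, n)) (B : 'M[H]_(m2, n)) :
  col_mx A B = 0 -> A = 0 /\ B = 0.
Proof. by rewrite -col_mx0 => /eq_col_mx. Qed.

Lemma gs n m (b : 'M[H]_(n, m)) : Kmx F b ->
  (forall c : 'cV_m, Kmx F c -> b *m c = 0 -> c = 0) ->
  exists (Y : 'M[H]_(n, m)) (T S : 'M[H]_m), [/\ Kmx F Y, adj Y *m Y = 1%:M, Kmx F T, Kmx F S &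
                    Y = b *m T /\ b = Y *m S].
Proof.
elim: m b => [|m IH] b Kb Ib.
  exists b, 1%:M, 1%:M; split; rewrite ?mulmx1 //; try exact: Kmx1.
  by apply/matrixP => -[].
move: b Kb Ib; change m.+1 with (1 + m) => b Kb Ib.
set v := lsubmx b; set b1 := rsubmx b.
have bE : b = row_mx v b1 by rewrite /v /b1 hsubmxK.
have Kv : Kmx F v by apply: Kmx_lsub.
have Kb1 : Kmx F b1 by apply: Kmx_rsub.
have Ib1 : forall c : 'cV_m, Kmx F c -> b1 *m c = 0 -> c = 0.
  move=> c Kc h.
  have : col_mx 0 c = 0 :> 'cV_(1 + m).
    apply: Ib; first by apply: Kmx_col_mx => //; apply: Kmx0.
    by rewrite bE mul_row_col mulmx0 add0r h.
  by case/col_mx_eq0.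
have [Y1 [T1 [S1 [KY1 uY1 KT1 KS1 [Y1E b1E]]]]] := IH b1 Kb1 Ib1.
set w := v - Y1 *m (adj Y1 *m v).
have Kw : Kmx F w by apply: KmxB => //; apply: KmxM => //; apply: KmxM => //; apply: Kmx_adj.
have Y1w : adj Y1 *m w = 0 by rewrite /w mulmxBr (mulmxA (adj Y1) Y1) uY1 mul1mx subrr.
have w0 : vnorm2 w != 0.
  apply/eqP => /vnorm2_eq0 w0.
  have : col_mx (- 1%:M) (T1 *m (adj Y1 *m v)) = 0 :> 'cV_(1 + m).
    apply: Ib.
      apply: Kmx_col_mx; first by apply: KmxN; apply: Kmx1.
      by apply: KmxM => //; apply: KmxM => //; apply: Kmx_adj.
    rewrite bE mul_row_col mulmxN mulmx1 (mulmxA b1 T1) -Y1E.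
    by move/eqP: w0; rewrite subr_eq0 => /eqP <-; rewrite addNr.
  case/col_mx_eq0 => /matrixP /(_ 0 0); rewrite !mxE /= mulr1n => /eqP.
  by rewrite oppr_eq0 oner_eq0.
set nu := vnorm w.
have nu0 : nu != 0.
  by apply: contra w0 => /eqP h; rewrite -vnorm_sq -/nu h expr0n.
set y := rq nu^-1 *: w.
have Y1y : adj Y1 *m y = 0 by rewrite /y mulmx_scale_rq Y1w scaler0.
have yY1 : adj y *m Y1 = 0 by rewrite -[Y1]adjK -adj_mul Y1y adj0.
have yy : adj y *m y = 1%:M.
  rewrite /y adj_scale_rq -scalemxAl mulmx_scale_rq adj_vec scale_rqA.
  rewrite scale_scalar_mx -rqM -vnorm_sq -/nu -rq1; congr (rq _)%:M.
  by field.
exists (row_mx y Y1).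
exists (row_mx (rq nu^-1 *: col_mx 1%:M (- (T1 *m (adj Y1 *m v)))) (col_mx 0 T1)).
exists (col_mx (row_mx (rq nu)%:M 0) (row_mx (adj Y1 *m v) S1)).
split.
- apply: Kmx_row_mx => //; exact: Kmx_scale_rq.
- by rewrite adj_row_mx mul_col_row yy yY1 Y1y uY1 -scalar_mx_block.
- apply: Kmx_row_mx; last by apply: Kmx_col_mx => //; apply: Kmx0.
  apply: Kmx_scale_rq; apply: Kmx_col_mx; first exact: Kmx1.
  by apply: KmxN; apply: KmxM => //; apply: KmxM => //; apply: Kmx_adj.
- apply: Kmx_col_mx; apply: Kmx_row_mx => //; try exact: Kmx0.
    by apply: Kmx_scalar; apply: inK_rq.
  by apply: KmxM => //; apply: Kmx_adj.
- split.
  rewrite mul_mx_row mulmx_scale_rq bE !mul_row_col mulmx1 mulmx0 add0r -Y1E.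
  by rewrite mulmxN (mulmxA b1 T1) -Y1E.
  rewrite mul_row_col !mul_mx_row add_row_mx mulmx0 add0r -b1E mul_mx_rq /y scale_rqA.
  by rewrite mulfV // rq1 scale1r /w subrK -bE.
Qed.

Lemma pproj n q (eta : 'cV[H]_n -> Prop) (Y : 'M[H]_(n, q)) :
  Kmx F Y -> adj Y *m Y = 1%:M -> (forall v, eta v <-> Kspan F Y v) ->
  Pproj F eta = Y *m adj Y.
Proof.
move=> KY uY etaE.
have HY : is_orth_proj F eta (Y *m adj Y).
  move=> v Kv; split.
    apply/etaE; exists (adj Y *m v); split; last by rewrite mulmxA.
    by apply: KmxM => //; apply: Kmx_adj.
  move=> w /etaE [c [Kc ->]].
  have hh : adj Y *m (Y *m adj Y *m v) = adj Y *m v by rewrite !mulmxA uY mul1mx.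
  by rewrite adj_mul -mulmxA mulmxBr hh subrr mulmx0.
have uniq : forall P, is_orth_proj F eta P -> P = Y *m adj Y.
  move=> P hP; apply/matrixP => i j.
  have [/etaE [c [Kc Pc]] hort] := hP (delta_mx j 0) (Kmx_delta R F j (0 : 'I_1)).
  set c2 := adj Y *m delta_mx j 0 - c.
  have Kc2 : Kmx F c2.
    by apply: KmxB => //; apply: KmxM; [apply: Kmx_adj | apply: Kmx_delta].
  have e1 : adj Y *m (delta_mx j 0 - Y *m c) = c2.
    by rewrite mulmxBr (mulmxA (adj Y) Y) uY mul1mx.
  have := hort (Y *m c2); rewrite Pc adj_mul -mulmxA e1.
  move=> /(_ _) h.
  have c20 : c2 = 0.
    apply: adj_vec0; apply: h; apply/etaE; by exists c2.
  have : c = adj Y *m delta_mx j 0.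
    by move/eqP: c20; rewrite subr_eq0 => /eqP.
  move=> cE; move: Pc; rewrite cE mulmxA => /(congr1 (fun M : 'cV[H]_n => M i 0)).
  by rewrite -!colE !mxE.
rewrite /Pproj; apply: uniq.
by apply: (epsilon_spec (inhabits 0) (is_orth_proj F eta)); exists (Y *m adj Y).
Qed.

Lemma Kspan_mulr n p q (M : 'M[H]_(n, p)) (T : 'M[H]_(p, q)) v :
  Kmx F T -> Kspan F (M *m T) v -> Kspan F M v.
Proof.
by move=> KT [c [Kc ->]]; exists (T *m c); split; [apply: KmxM | rewrite mulmxA].
Qed.

Lemma imgsp_Kspan n p (M : 'M[H]_n) (N : 'M[H]_(n, p)) v :
  imgsp M (Kspan F N) v <-> Kspan F (M *m N) v.
Proof.
split.
  by move=> [w [[c [Kc ->]] ->]]; exists c; split => //; rewrite mulmxA.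
by move=> [c [Kc ->]]; exists (N *m c); split; [exists c | rewrite mulmxA].
Qed.

End GS.

From mathcomp Require Import complex spectral.

Section Eig.
Variable R : realType.
Local Notation H := (quat R).

Lemma ReD (x y : R[i]) : complex.Re (x + y) = complex.Re x + complex.Re y.
Proof. by case: x => a b; case: y => c d. Qed.
Lemma ImD (x y : R[i]) : complex.Im (x + y) = complex.Im x + complex.Im y.
Proof. by case: x => a b; case: y => c d. Qed.
Lemma ReM (x y : R[i]) : complex.Re (x * y) = complex.Re x * complex.Re y - complex.Im x * complex.Im y.
Proof. by case: x => a b; case: y => c d. Qed.
Lemma ImM (x y : R[i]) : complex.Im (x * y) = complex.Re x * complex.Im y + complex.Im x * complex.Re y.
Proof. by case: x => a b; case: y => c d. Qed.
Lemma ReN (x : R[i]) : complex.Re (- x) = - complex.Re x.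
Proof. by case: x. Qed.
Lemma ImN (x : R[i]) : complex.Im (- x) = - complex.Im x.
Proof. by case: x. Qed.
Lemma Re_conj (x : R[i]) : complex.Re (conjc x) = complex.Re x.
Proof. by case: x. Qed.
Lemma Im_conj (x : R[i]) : complex.Im (conjc x) = - complex.Im x.
Proof. by case: x. Qed.
Lemma Re0 : complex.Re (0 : R[i]) = 0. Proof. by []. Qed.
Lemma Im0 : complex.Im (0 : R[i]) = 0. Proof. by []. Qed.
Lemma Re_sum I (r : seq I) (P : pred I) (f : I -> R[i]) :
  complex.Re (\sum_(i <- r | P i) f i) = \sum_(i <- r | P i) complex.Re (f i).
Proof. by apply: (big_morph (@complex.Re R) ReD Re0). Qed.
Lemma Im_sum I (r : seq I) (P : pred I) (f : I -> R[i]) :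
  complex.Im (\sum_(i <- r | P i) f i) = \sum_(i <- r | P i) complex.Im (f i).
Proof. by apply: (big_morph (@complex.Im R) ImD Im0). Qed.
Lemma complex_eq0 (x : R[i]) : complex.Re x = 0 -> complex.Im x = 0 -> x = 0.
Proof. by case: x => a b /= -> ->. Qed.

Definition z1 (q : H) : R[i] := Complex (qre q) (qi q).
Definition z2 (q : H) : R[i] := Complex (qj q) (qk q).

Definition chi k (M : 'M[H]_k) : 'M[R[i]]_(k + k) :=
  block_mx (map_mx z1 M) (map_mx z2 M)
           (map_mx (fun q => - conjc (z2 q)) M) (map_mx (fun q => conjc (z1 q)) M).

Lemma eig_quat k (M : 'M[H]_k) : (0 < k)%N -> adj M = M ->
  exists (c : 'cV[H]_k) (x y : R), c != 0 /\ M *m c = c *m (Quat x y 0 0)%:M.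
Proof.
move=> k0 aM.
have Mji : forall i j, M j i = qconj (M i j).
  by move=> i j; rewrite -{1}aM adjE.
have [a ha] := @eigenvalue_closed _ _ (chi M) (ltn_addl k k0).
have [v vE v0] := eigenvalueP ha.
set v1 := lsubmx v; set v2 := rsubmx v.
have vE' : row_mx v1 v2 *m chi M = a *: row_mx v1 v2 by rewrite /v1 /v2 hsubmxK.
move: vE'; rewrite /chi mul_row_block scale_row_mx => /eq_row_mx [E1 E2].
pose c : 'cV[H]_k := \col_j Quat (complex.Re (v1 0 j)) (- complex.Im (v1 0 j)) (- complex.Re (v2 0 j)) (- complex.Im (v2 0 j)).
exists c, (complex.Re a), (- complex.Im a); split.
  apply: contra v0 => /eqP c0.
  have h1 : v1 = 0.
    apply/matrixP => i j; rewrite ord1 mxE.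
    have := congr1 (fun X : 'cV[H]_k => X j 0) c0; rewrite !mxE => -[h1 h2 _ _].
    by apply: complex_eq0 => //; rewrite -[complex.Im _]opprK h2 oppr0.
  have h2 : v2 = 0.
    apply/matrixP => i j; rewrite ord1 mxE.
    have := congr1 (fun X : 'cV[H]_k => X j 0) c0; rewrite !mxE => -[_ _ g1 g2].
    by apply: complex_eq0; rewrite -[LHS]opprK ?g1 ?g2 oppr0.
  by rewrite -[v]hsubmxK -/v1 -/v2 h1 h2 row_mx0.
apply/matrixP => i z; rewrite ord1 {z}.
have E1i := congr1 (fun X : 'rV[R[i]]_k => X 0 i) E1.
have E2i := congr1 (fun X : 'rV[R[i]]_k => X 0 i) E2.
move: E1i E2i; rewrite !mxE /= => E1i E2i.
have R1 := congr1 (@complex.Re R) E1i; have I1 := congr1 (@complex.Im R) E1i.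
have R2 := congr1 (@complex.Re R) E2i; have I2 := congr1 (@complex.Im R) E2i.
move: R1 I1 R2 I2; rewrite ?(ReD, ImD, Re_sum, Im_sum) => R1 I1 R2 I2.
rewrite big_ord1 /c !mxE /= ?mulr1n.
apply: quatP.
- rewrite qre_sum.
  transitivity (\sum_j complex.Re (v1 0 j * map_mx z1 M j i) + \sum_j complex.Re (v2 0 j * map_mx (fun q => - conjc (z2 q)) M j i)).
    rewrite -big_split; apply: eq_bigr => j _; rewrite !mxE Mji.
    move: (M i j) (v1 0 j) (v2 0 j) => [h0 h1 h2 h3] [x1 y1] [x2 y2].
    rewrite !(ReM, ImM, ReN, ImN, Re_conj, Im_conj) /=; ring.
  rewrite R1 ReM /=; ring.
- rewrite qi_sum.
  transitivity (- (\sum_j complex.Im (v1 0 j * map_mx z1 M j i) + \sum_j complex.Im (v2 0 j * map_mx (fun q => - conjc (z2 q)) M j i))).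
    rewrite -big_split -sumrN; apply: eq_bigr => j _; rewrite !mxE Mji.
    move: (M i j) (v1 0 j) (v2 0 j) => [h0 h1 h2 h3] [x1 y1] [x2 y2].
    rewrite !(ReM, ImM, ReN, ImN, Re_conj, Im_conj) /=; ring.
  rewrite I1 ImM /=; ring.
- rewrite qj_sum.
  transitivity (- (\sum_j complex.Re (v1 0 j * map_mx z2 M j i) + \sum_j complex.Re (v2 0 j * map_mx (fun q => conjc (z1 q)) M j i))).
    rewrite -big_split -sumrN; apply: eq_bigr => j _; rewrite !mxE Mji.
    move: (M i j) (v1 0 j) (v2 0 j) => [h0 h1 h2 h3] [x1 y1] [x2 y2].
    rewrite !(ReM, ImM, ReN, ImN, Re_conj, Im_conj) /=; ring.
  rewrite R2 ReM /=; ring.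
- rewrite qk_sum.
  transitivity (- (\sum_j complex.Im (v1 0 j * map_mx z2 M j i) + \sum_j complex.Im (v2 0 j * map_mx (fun q => conjc (z1 q)) M j i))).
    rewrite -big_split -sumrN; apply: eq_bigr => j _; rewrite !mxE Mji.
    move: (M i j) (v1 0 j) (v2 0 j) => [h0 h1 h2 h3] [x1 y1] [x2 y2].
    rewrite !(ReM, ImM, ReN, ImN, Re_conj, Im_conj) /=; ring.
  rewrite I2 ImM /=; ring.
Qed.

End Eig.

Section EigK.
Variable R : realType.
Local Notation H := (quat R).
Variable F : Kfield.

Definition piK (q : H) : H :=
  match F with
  | Kreal => rq (qre q)
  | Kcomplex => Quat (qre q) (qi q) 0 0
  | Kquat => q
  end.

Definition epsq (l : nat) : H :=
  match F, l with
  | Kreal, 0 => 1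
  | Kreal, 1 => Quat 0 1 0 0
  | Kreal, 2 => Quat 0 0 1 0
  | Kreal, 3 => Quat 0 0 0 1
  | Kcomplex, 0 => 1
  | Kcomplex, 1 => Quat 0 0 1 0
  | Kquat, 0 => 1
  | _, _ => 0
  end.

Lemma inK_pi q : inK F (piK q).
Proof. by rewrite /piK; case: F => //=; rewrite !eqxx. Qed.
Lemma piD p q : piK (p + q) = piK p + piK q.
Proof. by rewrite /piK; case: F => //; apply: quatP => /=; rewrite ?addr0. Qed.
Lemma pi0 : piK 0 = 0.
Proof. by rewrite /piK; case: F. Qed.
Lemma pi_sum I (r : seq I) (P : pred I) (f : I -> H) :
  piK (\sum_(i <- r | P i) f i) = \sum_(i <- r | P i) piK (f i).
Proof. by apply: (big_morph piK piD pi0). Qed.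
Lemma piM h q : inK F h -> piK (h * q) = h * piK q.
Proof.
rewrite /piK; case: F => //=; case: h => a b c d /=.
  by move=> /and3P[/eqP-> /eqP-> /eqP->]; apply: quatP => /=; ring.
by move=> /andP[/eqP-> /eqP->]; apply: quatP => /=; ring.
Qed.
Lemma pi_decomp q : q = \sum_(l < 4) piK (q * qconj (epsq l)) * epsq l.
Proof.
rewrite !big_ord_recr big_ord0 /= /piK /epsq.
by case: F; case: q => a b c d; apply: quatP => /=; ring.
Qed.

Lemma eigK k (M : 'M[H]_k) : (0 < k)%N -> Kmx F M -> adj M = M ->
  exists (c : 'cV[H]_k) (d : R), [/\ Kmx F c, c != 0 & M *m c = rq d *: c].
Proof.
move=> k0 KM aM.
have [c [x [y [c0 Mc]]]] := eig_quat k0 aM.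
have y0 : y = 0.
  set n := vnorm2 c.
  have n0 : n != 0 by apply: contra c0 => /eqP /vnorm2_eq0 ->.
  set G := adj c *m M *m c.
  have G1 : G = (rq n * Quat x y 0 0)%:M.
    by rewrite /G -mulmxA Mc mulmxA adj_vec scalar_mxM.
  have G2 : adj G = G by rewrite /G !adj_mul adjK aM mulmxA.
  move: G2; rewrite G1 adj_scalar => /matrixP /(_ 0 0); rewrite !mxE /= mulr1n.
  move=> /(congr1 (@qi R)) /= h.
  have : n * y = 0 by lra.
  by move/eqP; rewrite mulf_eq0 (negPf n0) => /eqP.
have Mc' : M *m c = rq x *: c by rewrite Mc y0 mul_mx_rq.
pose cl (l : 'I_4) : 'cV[H]_k := map_mx (fun q => piK (q * qconj (epsq l))) c.
have Mcl : forall l, M *m cl l = rq x *: cl l.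
  move=> l; apply/matrixP => i j; rewrite !mxE.
  transitivity (piK ((M *m c) i j * qconj (epsq l))).
    rewrite !mxE mulr_suml pi_sum; apply: eq_bigr => m _.
    by rewrite /cl mxE -mulrA (piM _ (KM i m)).
  by rewrite Mc' !mxE -mulrA piM //; apply: inK_rq.
have [l hl|none] := pickP (fun l : 'I_4 => cl l != 0).
  exists (cl l), x; split => //.
  by move=> i j; rewrite mxE; apply: inK_pi.
case/negP: c0; apply/eqP/matrixP => i j; rewrite mxE.
rewrite [c i j]pi_decomp; apply: big1 => l _.
have := none l; rewrite /= ?negbK => /eqP /matrixP /(_ i j); rewrite !mxE => ->.
by rewrite mul0r.
Qed.

End EigK.

Section Sqrt.
Variable R : realType.
Local Notation H := (quat R).
Variable F : Kfield.

Lemma quad_unit k (U M : 'M[H]_k) (c : 'cV[H]_k) : adj U *m U = 1%:M ->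
  adj (U *m c) *m (U *m M *m adj U) *m (U *m c) = adj c *m M *m c.
Proof.
move=> uU; rewrite adj_mul -!mulmxA (mulmxA (adj U) U) uU mul1mx.
by rewrite !mulmxA -(mulmxA _ (adj U) U) uU mulmx1.
Qed.

Lemma sqrtK k (M : 'M[H]_k) : psdK F M -> exists S, psdK F S /\ S *m S = M.
Proof.
elim: k M => [|m IH] M [KM aM pM].
  exists M; split; first by split.
  by apply/matrixP => -[].
move: M KM aM pM; change m.+1 with (1 + m) => M KM aM pM.
have [c [d [Kc c0 Mc]]] := eigK (ltn0Sn m) KM aM.
have n0 : 0 < vnorm2 c.
  rewrite lt_def vnorm2_ge0 andbT; apply: contra c0 => /eqP /vnorm2_eq0 ->.
  by rewrite eqxx.
have d0 : 0 <= d.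
  have := pM c Kc; rewrite -mulmxA Mc mulmx_scale_rq adj_vec.
  rewrite !mxE eqxx mulr1n qre_rqM /= => h.
  nra.
have [U [[KU aU bU] Uc]] := @red R F m c Kc.
set s := vnorm c in Uc.
have s0 : s != 0.
  apply/eqP => h; have : vnorm2 c = 0 by rewrite -vnorm_sq -/s h expr0n.
  by move=> h'; rewrite h' ltxx in n0.
pose e1 : 'cV[H]_(1 + m) := col_mx 1%:M 0.
have Uc' : U *m c = rq s *: e1 by rewrite Uc /e1 scale_col_mx scaler0 scalemx1.
have Ue1 : adj U *m e1 = rq s^-1 *: c.
  have : c = rq s *: (adj U *m e1).
    by rewrite -mulmx_scale_rq -Uc' mulmxA aU mul1mx.
  move=> ->; rewrite scale_rqA mulVf // rq1 scale1r //.
set M' := U *m M *m adj U.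
have M'e1 : M' *m e1 = rq d *: e1.
  rewrite /M' -mulmxA Ue1 mulmx_scale_rq -mulmxA Mc mulmx_scale_rq Uc'.
  by rewrite !scale_rqA; congr (rq _ *: _); field.
have aM' : adj M' = M' by rewrite /M' !adj_mul adjK aM mulmxA.
have KM' : Kmx F M' by apply: KmxM; [apply: KmxM | apply: Kmx_adj].
have M'E := submxK M'.
set ul := ulsubmx M' in M'E; set ur := ursubmx M' in M'E.
set dl := dlsubmx M' in M'E; set dr := drsubmx M' in M'E.
have [ulE dlE] : ul = (rq d)%:M /\ dl = 0.
  move: M'e1; rewrite -M'E /e1 mul_block_col !mulmx0 !addr0 !mulmx1.
  by rewrite scale_col_mx scaler0 scalemx1 => /eq_col_mx.
have [urE adr] : ur = 0 /\ adj dr = dr.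
  move: aM'; rewrite -M'E adj_block_mx => /eq_block_mx [_ h1 _ h2].
  by split => //; rewrite -h1 dlE adj0.
have Kdr : Kmx F dr by move=> i j; rewrite /dr; apply: Kmx_rsub; apply: Kmx_dsub.
have pdr : psdK F dr.
  split => // c2 Kc2.
  have := pM (adj U *m col_mx 0 c2) (KmxM (Kmx_adj KU) (Kmx_col_mx (@Kmx0 R F 1 1) Kc2)).
  have -> : adj (adj U *m col_mx 0 c2) *m M *m (adj U *m col_mx 0 c2) =
            adj (col_mx 0 c2) *m M' *m col_mx 0 c2.
    rewrite /M' adj_mul adjK -!mulmxA; congr (_ *m _); rewrite !mulmxA; congr (_ *m _).
  by rewrite -M'E adj_col_mx adj0 mul_row_block dlE !(mul0mx, mulmx0, add0r, addr0) mul_row_col !(mul0mx, add0r).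
have [S2 [[KS2 aS2 pS2] S2E]] := IH dr pdr.
pose S' : 'M[H]_(1 + m) := block_mx (rq (Num.sqrt d))%:M 0 0 S2.
have SS : S' *m S' = M'.
  rewrite /S' mulmx_block !mulmx0 !mul0mx !addr0 !add0r S2E -scalar_mxM -rqM.
  by rewrite -expr2 sqr_sqrtr // -ulE -urE -dlE M'E.
exists (adj U *m S' *m U); split; last first.
  have -> : adj U *m S' *m U *m (adj U *m S' *m U) = adj U *m (S' *m S') *m U.
    by rewrite !mulmxA -(mulmxA _ U (adj U)) bU mulmx1.
  rewrite SS /M' !mulmxA aU mul1mx -mulmxA aU mulmx1 //.
have KS' : Kmx F S'.
  by apply: Kmx_block_mx => //; try apply: Kmx0; apply: Kmx_scalar; apply: inK_rq.
split.
- by apply: KmxM => //; apply: KmxM => //; apply: Kmx_adj.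
- by rewrite !adj_mul adjK /S' adj_block_mx !adj0 aS2 adj_scalar qconj_rq mulmxA.
move=> c3 Kc3.
have -> : adj c3 *m (adj U *m S' *m U) *m c3 = adj (U *m c3) *m S' *m (U *m c3).
  by rewrite adj_mul !mulmxA.
set u := U *m c3.
have Ku : Kmx F u by apply: KmxM.
rewrite -[u]vsubmxK /S' adj_col_mx mul_row_block !(mulmx0, mul0mx, addr0, add0r) mul_row_col.
have qreD : forall p q : H, qre (p + q) = qre p + qre q by [].
rewrite mxE qreD.
apply: addr_ge0; last by apply: pS2; apply: Kmx_dsub.
rewrite mul_mx_rq -scalemxAl adj_vec !mxE eqxx mulr1n qre_rqM /=.
by rewrite mulr_ge0 ?sqrtr_ge0 ?vnorm2_ge0.
Qed.

Lemma psd_sqrt_spec k (M : 'M[H]_k) : psdK F M ->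
  psdK F (psd_sqrt F M) /\ psd_sqrt F M *m psd_sqrt F M = M.
Proof.
move=> pM; rewrite /psd_sqrt.
by apply: (epsilon_spec (inhabits 0) (fun s => psdK F s /\ s *m s = M)); apply: sqrtK.
Qed.

End Sqrt.

Section Mxget.
Variable R : realType.
Local Notation H := (quat R).

Lemma mxget_inE m n (M : 'M[H]_(m, n)) i j (hi : (i < m)%N) (hj : (j < n)%N) :
  mxget M i j = M (Ordinal hi) (Ordinal hj).
Proof. by rewrite /mxget (@insubT nat (fun k => (k < m)%N) _ i hi) (@insubT nat (fun k => (k < n)%N) _ j hj). Qed.

Lemma mxgetE m n (M : 'M[H]_(m, n)) (i : 'I_m) (j : 'I_n) : mxget M i j = M i j.
Proof. by rewrite (mxget_inE _ (ltn_ord i) (ltn_ord j)); congr (M _ _); apply: val_inj. Qed.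

Lemma mxget_outi m n (M : 'M[H]_(m, n)) i j : (m <= i)%N -> mxget M i j = 0.
Proof. by move=> hi; rewrite /mxget insubF //; apply/negbTE; rewrite -leqNgt. Qed.

Lemma mxget_outj m n (M : 'M[H]_(m, n)) i j : (n <= j)%N -> mxget M i j = 0.
Proof.
move=> hj; rewrite /mxget; case: (insub i) => // i'.
by rewrite insubF //; apply/negbTE; rewrite -leqNgt.
Qed.

Lemma mxget_col m1 m2 n (A : 'M[H]_(m1, n)) (B : 'M[H]_(m2, n)) i j :
  mxget (col_mx A B) i j = if (i < m1)%N then mxget A i j else mxget B (i - m1) j.
Proof.
have [hj|hj] := ltnP j n; last first.
  by rewrite !mxget_outj //; case: ifP.
have [hi|hi] := ltnP i (m1 + m2); last first.
  rewrite mxget_outi //; case: ifP => h; first lia.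
  by rewrite mxget_outi //; lia.
rewrite (mxget_inE _ hi hj) mxE.
case: splitP => [i' /= ei|i' /= ei].
  have hi1 : (i < m1)%N by have := ltn_ord i'; lia.
  rewrite hi1 (mxget_inE _ hi1 hj); congr (A _ _); exact: val_inj.
have hi1 : (i < m1)%N = false by apply/negbTE; lia.
have hi2 : (i - m1 < m2)%N by have := ltn_ord i'; lia.
rewrite hi1 (mxget_inE _ hi2 hj); congr (B _ _); apply: val_inj => /=; lia.
Qed.

Lemma mxget_row m n1 n2 (A : 'M[H]_(m, n1)) (B : 'M[H]_(m, n2)) i j :
  mxget (row_mx A B) i j = if (j < n1)%N then mxget A i j else mxget B i (j - n1).
Proof.
have [hi|hi] := ltnP i m; last first.
  by rewrite !mxget_outi //; case: ifP.
have [hj|hj] := ltnP j (n1 + n2); last first.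
  rewrite mxget_outj //; case: ifP => h; first lia.
  by rewrite mxget_outj //; lia.
rewrite (mxget_inE _ hi hj) mxE.
case: splitP => [j' /= ej|j' /= ej].
  have hj1 : (j < n1)%N by have := ltn_ord j'; lia.
  rewrite hj1 (mxget_inE _ hi hj1); congr (A _ _); exact: val_inj.
have hj1 : (j < n1)%N = false by apply/negbTE; lia.
have hj2 : (j - n1 < n2)%N by have := ltn_ord j'; lia.
rewrite hj1 (mxget_inE _ hi hj2); congr (B _ _); apply: val_inj => /=; lia.
Qed.

Lemma mxget_block m1 m2 n1 n2 (A : 'M[H]_(m1, n1)) (B : 'M[H]_(m1, n2))
  (C : 'M[H]_(m2, n1)) (D : 'M[H]_(m2, n2)) i j :
  mxget (block_mx A B C D) i j =
  if (i < m1)%N then (if (j < n1)%N then mxget A i j else mxget B i (j - n1))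
  else (if (j < n1)%N then mxget C (i - m1) j else mxget D (i - m1) (j - n1)).
Proof. by rewrite /block_mx mxget_col !mxget_row. Qed.

Lemma mxget0 m n i j : mxget (0 : 'M[H]_(m, n)) i j = 0.
Proof. by rewrite /mxget; case: insub => // i'; case: insub => // j'; rewrite mxE. Qed.

Lemma mxget1 m i j : mxget (1%:M : 'M[H]_m) i j =
  if (i < m)%N then (if (j < m)%N then (if i == j then 1 else 0) else 0) else 0.
Proof.
have [hi|hi] := ltnP i m; last by rewrite mxget_outi.
have [hj|hj] := ltnP j m; last by rewrite mxget_outj.
rewrite (mxget_inE _ hi hj) mxE /=.
by rewrite -val_eqE /=; case: (i == j).
Qed.

Lemma matrix_mxgetE m n (M : 'M[H]_(m, n)) (N : 'M[H]_(m, n)) :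
  (forall i j, (i < m)%N -> (j < n)%N -> mxget M i j = mxget N i j) -> M = N.
Proof.
move=> h; apply/matrixP => i j; rewrite -!mxgetE; apply: h; apply: ltn_ord.
Qed.

End Mxget.

Ltac dec1 := match goal with
 | |- context [if (?a < ?b)%N then _ else _] => case: (ltnP a b) => ?; try (exfalso; lia)
 | |- context [if (?a == ?b :> nat) then _ else _] => case: (@eqP nat a b) => ?; try (exfalso; lia)
 end.
Ltac dec := repeat dec1; try reflexivity; try (congr (mxget _ _ _); lia).

Section Canon.
Variable R : realType.
Local Notation H := (quat R).

Lemma mxget_mxget m n m' n' (X : 'M[H]_(m', n')) i j : (i < m)%N -> (j < n)%N ->
  mxget (\matrix_(i < m, j < n) mxget X i j) i j = mxget X i j.
Proof. by move=> hi hj; rewrite (mxget_inE _ hi hj) mxE. Qed.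

Lemma mxget_castmx m n m' n' (e : (m = m') * (n = n')) (A : 'M[H]_(m, n)) i j :
  mxget (castmx e A) i j = mxget A i j.
Proof. by case: e => e1 e2; case: m' / e1; case: n' / e2; rewrite castmx_id. Qed.

Lemma xhat0E p q k : xhat0 R (p + k + q + k) k = col_mx (0 : 'M[H]_(p + k + q, k)) 1%:M.
Proof.
apply: matrix_mxgetE => i j hi hj; rewrite /xhat0 mxget_mxget //.
rewrite !mxget_col !mxget0 !mxget1; dec.
Qed.

Lemma y0E p q k : y0 R (p + k + q + k) (p + k) =
  col_mx (col_mx 1%:M (0 : 'M[H]_(q, p + k))) (0 : 'M[H]_(k, p + k)).
Proof.
apply: matrix_mxgetE => i j hi hj; rewrite /y0 mxget_mxget //.
rewrite !mxget_col !mxget0 !mxget1; dec.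
Qed.

Lemma rhoE m1 m2 k (al : 'M[H]_m1) (al0 : 'M[H]_m2) (de : 'M[H]_k) :
  m1 = m2 -> (forall i j, mxget al i j = mxget al0 i j) ->
  \matrix_(i < m2 + k, j < m2 + k) mxget (block_mx al 0 0 de) i j = block_mx al0 0 0 de.
Proof.
move=> e h; apply: matrix_mxgetE => i j hi hj; rewrite mxget_mxget //.
rewrite !mxget_block !mxget0 h; dec.
Qed.

Lemma jmatE F p q k (a : 'M[H]_k) :
  jmat F (p + k + q + k) k (p + k) a =
  block_mx (block_mx (block_mx 1%:M 0 0 (psd_sqrt F (1%:M - adj a *m a)) : 'M_(p + k)) 0 0 (1%:M : 'M_q))
           (col_mx (col_mx (0 : 'M_(p, k)) (adj a)) (0 : 'M_(q, k)))
           (row_mx (row_mx (0 : 'M_(k, p)) (- a)) (0 : 'M_(k, q)))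
           (psd_sqrt F (1%:M - a *m adj a)).
Proof.
apply: matrix_mxgetE => i j hi hj; rewrite /jmat mxget_mxget //.
rewrite !mxget_block !mxget_col !mxget_row !mxget0 !mxget1; dec.
Qed.

End Canon.

Lemma unitaryK_cast (R : realType) (F : Kfield) m m' (e : m = m') (A : 'M[quat R]_m) :
  unitaryK F (castmx (e, e) A) <-> unitaryK F A.
Proof. by case: m' / e; rewrite castmx_id. Qed.

Lemma dsubmx_mul (R : realType) m1 m2 n p (A : 'M[quat R]_(m1 + m2, n)) (B : 'M[quat R]_(n, p)) :
  dsubmx (A *m B) = dsubmx A *m B.
Proof. by rewrite -{1}[A]vsubmxK mul_col_mx col_mxKd. Qed.
Lemma usubmx_mul (R : realType) m1 m2 n p (A : 'M[quat R]_(m1 + m2, n)) (B : 'M[quat R]_(n, p)) :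
  usubmx (A *m B) = usubmx A *m B.
Proof. by rewrite -{1}[A]vsubmxK mul_col_mx col_mxKu. Qed.

Theorem lemma4p2 (R : realType) (F : Kfield) (n k k' : nat)
    (hk1 : (1 <= k)%N) (hkk' : (k <= k')%N) (hk'n : (k' < n)%N) (hsum : (k + k' <= n)%N)
    (r : 'M[quat R]_k) (hr0 : psdK F r) (hr1 : psdK F (1%:M - r))
    (eta : 'cV[quat R]_n -> Prop) (heta : GrassK F n k' eta)
    (x : 'M[quat R]_(n, k)) (hx : StiefelK F x)
    (gx : 'M[quat R]_n) (hgx : unitaryK F gx) (hxg : x = gx *m xhat0 R n k) :
  (exists delta0 : 'M[quat R]_k,
      unitaryK F delta0 /\ Cos2 F eta x = delta0 *m r *m adj delta0)
  <->
  (exists rho : 'M[quat R]_n,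
      inKgrp F n k rho /\
      forall v, eta v <-> imgsp (gx *m rho *m jmat F n k k' (psd_sqrt F r)) (eta0 F n k') v).
Proof.
have [p ep] : exists p, k' = (p + k)%N by exists (k' - k)%N; lia.
subst k'.
have [q eq] : exists q, n = (p + k + q + k)%N by exists (n - (p + k) - k)%N; lia.
subst n.
have eNk : (p + k + q + k - k)%N = (p + k + q)%N by lia.
have [Kr ar pr] := hr0.
have [[Ka aa pa] aaE] := psd_sqrt_spec hr0.
set a := psd_sqrt F r in Ka aa pa aaE *.
have hr1' : psdK F (1%:M - adj a *m a) by rewrite aa aaE.
have [[KS1 aS1 pS1] S1E] := psd_sqrt_spec hr1'.
set S1 := psd_sqrt F (1%:M - adj a *m a) in KS1 aS1 pS1 S1E.
pose Z0 : 'M[quat R]_(k, p + k) := row_mx 0 (- a).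
pose Q0 : 'M[quat R]_(p + k + q, p + k) := col_mx (block_mx 1%:M 0 0 S1) 0.
pose JY : 'M[quat R]_(p + k + q + k, p + k) := col_mx Q0 Z0.
have KZ0 : Kmx F Z0 by apply: Kmx_row_mx; [apply: Kmx0 | apply: KmxN].
have KQ0 : Kmx F Q0.
  apply: Kmx_col_mx; last exact: Kmx0.
  by apply: Kmx_block_mx => //; try apply: Kmx0; apply: Kmx1.
have KJY : Kmx F JY by apply: Kmx_col_mx.
have JYE : jmat F (p + k + q + k) k (p + k) a *m y0 R (p + k + q + k) (p + k) = JY.
  rewrite jmatE y0E -/S1 !mul_block_col !(mulmx0, addr0, mul0mx, add0r, mulmx1) mul_row_col !(mulmx0, addr0, mulmx1).
  by [].
have Q0Q0 : adj Q0 *m Q0 = block_mx 1%:M 0 0 (1%:M - r).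
  rewrite /Q0 adj_col_mx mul_row_col adj0 mul0mx addr0 adj_block_mx !adj0 adj1 aS1.
  rewrite mulmx_block !(mulmx0, mul0mx, addr0, add0r, mulmx1) S1E aa aaE //.
have Z0Z0 : adj Z0 *m Z0 = block_mx 0 0 0 r.
  rewrite /Z0 adj_row_mx mul_col_row adj0 !mul0mx !mulmx0 adjN aa mulNmx mulmxN opprK aaE //.
have Z0Z0' : Z0 *m adj Z0 = r.
  by rewrite /Z0 adj_row_mx mul_row_col mul0mx add0r adjN aa mulNmx mulmxN opprK aaE.
have JYJY : adj JY *m JY = 1%:M.
  rewrite /JY adj_col_mx mul_row_col Q0Q0 Z0Z0 add_block_mx !(addr0, add0r) subrK.
  by rewrite -scalar_mx_block.
have xhM : forall m (M : 'M[quat R]_(p + k + q + k, m)),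
    adj (xhat0 R (p + k + q + k) k) *m M = dsubmx M.
  move=> m M; rewrite xhat0E -{1}[M]vsubmxK adj_col_mx mul_row_col adj0 mul0mx add0r.
  by rewrite adj1 mul1mx.
have [Kg ag] := hgx.
have bg : gx *m adj gx = 1%:M.
  have G1 : adj gx *m gx = adj (1%:M : 'M[quat R]_(p + k + q + k)) *m 1%:M.
    by rewrite adj1 mulmx1.
  have [U [[KU aU bU] UE]] := uext Kg (@Kmx1 R F _) G1.
  by move: UE; rewrite mulmx1 => ->.
split.
- move=> [d0 [[Kd0 ad0] hC]].
  have [b [Kb Ib etab]] := heta.
  have [Y [T [S [KY uY KT KS [YE bE]]]]] := gs Kb Ib.
  have etaY : forall v, eta v <-> Kspan F Y v.
    move=> v; rewrite etab; split => h.
      by rewrite bE in h; exact: Kspan_mulr KS h.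
    by rewrite YE in h; exact: Kspan_mulr KT h.
  have PY := pproj KY uY etaY.
  set Y' := adj gx *m Y.
  have KY' : Kmx F Y' by apply: KmxM => //; apply: Kmx_adj.
  have uY' : adj Y' *m Y' = 1%:M.
    by rewrite /Y' adj_mul adjK -mulmxA (mulmxA gx) bg mul1mx uY.
  set Y2 : 'M[quat R]_(k, p + k) := dsubmx (Y' : 'M_(p + k + q + k, p + k)).
  have KY2 : Kmx F Y2 by apply: Kmx_dsub.
  have C2 : Cos2 F eta x = Y2 *m adj Y2.
    rewrite /Y2 -xhM adj_mul adjK /Y' adj_mul adjK /Cos2 PY hxg adj_mul !mulmxA //.
  set Bm : 'M[quat R]_(k, p + k) := d0 *m Z0.
  have KBm : Kmx F Bm by apply: KmxM.
  have BB : Bm *m adj Bm = Y2 *m adj Y2.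
    by rewrite -C2 hC /Bm adj_mul mulmxA -(mulmxA d0) Z0Z0'.
  have [W [[KW aW bW] WE]] :
      exists W, unit2 F W /\ adj Y2 = W *m adj Bm.
    by apply: uext; try apply: Kmx_adj; rewrite // !adjK BB.
  have Y2E : Y2 = Bm *m adj W by rewrite -[Y2]adjK WE adj_mul adjK.
  set Z' := Y' *m W.
  have KZ' : Kmx F Z' by apply: KmxM.
  have uZ' : adj Z' *m Z' = 1%:M.
    by rewrite /Z' adj_mul -mulmxA (mulmxA (adj Y')) uY' mul1mx aW.
  have dZ' : dsubmx (Z' : 'M_(p + k + q + k, p + k)) = Bm.
    by rewrite /Z' dsubmx_mul -/Y2 Y2E -mulmxA aW mulmx1.
  set Z1 := usubmx (Z' : 'M_(p + k + q + k, p + k)).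
  have KZ1 : Kmx F Z1 by apply: Kmx_usub.
  have BmBm : adj Bm *m Bm = block_mx 0 0 0 r.
    by rewrite /Bm adj_mul -mulmxA (mulmxA (adj d0)) ad0 mul1mx Z0Z0.
  have Z1Z1 : adj Z1 *m Z1 = adj Q0 *m Q0.
    move: uZ'; rewrite -[Z']vsubmxK -/Z1 dZ' adj_col_mx mul_row_col BmBm => h.
    rewrite Q0Q0; apply/eqP; rewrite -(subr_eq0 _ (block_mx 1%:M 0 0 (1%:M - r))).
    have -> : block_mx (1%:M : 'M_(p)) 0 0 (1%:M - r) = 1%:M - block_mx 0 0 0 r.
      rewrite (scalar_mx_block p k 1) opp_block_mx add_block_mx !oppr0 !addr0 //.
    by rewrite -h addrK subrr.
  have [al0 [[Kal0 aal0 bal0] al0E]] := uext KZ1 KQ0 Z1Z1.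
  pose al := castmx (esym eNk, esym eNk) al0.
  exists (\matrix_(i < p + k + q + k, j < p + k + q + k) mxget (block_mx al 0 0 d0) i j).
  have rhoEq : \matrix_(i < p + k + q + k, j < p + k + q + k) mxget (block_mx al 0 0 d0) i j
               = block_mx al0 0 0 d0.
    by apply: rhoE => // i j; rewrite /al mxget_castmx.
  split.
    exists al, d0; split => //.
    by apply/unitaryK_cast; split.
  move=> v; rewrite /eta0 imgsp_Kspan -mulmxA JYE rhoEq.
  have ZZ : block_mx al0 0 0 d0 *m JY = Z'.
    rewrite /JY mul_block_col !(mul0mx, addr0, add0r) -al0E -/Bm -dZ'.
    by rewrite /Z1 vsubmxK.
  rewrite -mulmxA ZZ etaY.
  have YE' : Y = gx *m Z' *m adj W.
    by rewrite /Z' -!mulmxA bW mulmx1 /Y' mulmxA bg mul1mx.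
  have ZE' : gx *m Z' = Y *m W.
    by rewrite /Z' /Y' !mulmxA bg mul1mx.
  split => h.
    by rewrite YE' in h; exact: Kspan_mulr (Kmx_adj KW) h.
  by rewrite ZE' in h; exact: Kspan_mulr KW h.
- move=> [rho [[al [de [ual [Kde ade] rhoD]]] etaE]].
  pose al0 := castmx (eNk, eNk) al.
  have [Kal0 aal0] : unitaryK F al0 by apply/unitaryK_cast.
  have rhoEq : rho = block_mx al0 0 0 de.
    by rewrite rhoD; apply: rhoE => // i j; rewrite /al0 mxget_castmx.
  exists de; split; first by split.
  have etaZ : forall v, eta v <-> Kspan F (gx *m rho *m JY) v.
    by move=> v; rewrite etaE /eta0 imgsp_Kspan -mulmxA JYE.
  set Z := gx *m rho *m JY.
  have Krho : Kmx F rho.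
    by rewrite rhoEq; apply: Kmx_block_mx => //; apply: Kmx0.
  have KZ : Kmx F Z by apply: KmxM => //; apply: KmxM.
  have arho : adj rho *m rho = 1%:M.
    rewrite rhoEq adj_block_mx !adj0 mulmx_block !(mulmx0, mul0mx, addr0, add0r) aal0 ade.
    by rewrite -scalar_mx_block.
  have uZ : adj Z *m Z = 1%:M.
    rewrite /Z !adj_mul -!mulmxA (mulmxA (adj gx)) ag mul1mx.
    by rewrite (mulmxA (adj rho)) arho mul1mx JYJY.
  have PZ := pproj KZ uZ etaZ.
  have hZ : adj (gx *m xhat0 R (p + k + q + k) k) *m Z = de *m Z0.
    rewrite adj_mul /Z !mulmxA -(mulmxA _ (adj gx)) ag mulmx1 -!mulmxA xhM.
    rewrite dsubmx_mul rhoEq.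
    have -> : dsubmx (block_mx al0 0 0 de) = row_mx 0 de by rewrite /block_mx col_mxKd.
    by rewrite /JY mul_row_col mul0mx add0r.
  rewrite /Cos2 PZ hxg.
  have -> : adj (gx *m xhat0 R (p + k + q + k) k) *m (Z *m adj Z) *m (gx *m xhat0 R (p + k + q + k) k)
     = (adj (gx *m xhat0 R (p + k + q + k) k) *m Z) *m (adj Z *m (gx *m xhat0 R (p + k + q + k) k)).
    by rewrite !mulmxA.
  have -> : adj Z *m (gx *m xhat0 R (p + k + q + k) k) = adj (de *m Z0).
    by rewrite -hZ adj_mul adjK.
  by rewrite hZ adj_mul -mulmxA (mulmxA Z0) Z0Z0' mulmxA.
Qed.
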